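(* Let $\mathcal{A}=(Q,\Sigma,t,o)$ be a synchronous automaton with finitely many states. If every state of $\mathcal{A}$ has at least two fixed points in $\Sigma^{\omega}$, then every state of $\mathcal{A}$ has infinitely many fixed points in $\Sigma^{\omega}$.
   Context: A synchronous automaton is a quadruple $(Q,\Sigma,t,o)$ with $Q$ a finite set of states, $\Sigma$ a finite alphabet, $t:Q\times\Sigma\to Q$ and $o:Q\times\Sigma\to\Sigma$. $\Sigma^\omega$ is the set of right-infinite words over $\Sigma$. A state $q_0$ acts on $\omega=\sigma_1\sigma_2\cdots\in\Sigma^\omega$ by $q_0(\omega)=o(q_0,\sigma_1)o(q_1,\sigma_2)o(q_2,\sigma_3)\cdots$ where $q_i=t(q_{i-1},\sigma_i)$. A fixed point of $q$ is an $\omega$ with $q(\omega)=\omega$. *)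

(* Defs.v *)
From Stdlib Require List.
From mathcomp Require Import all_boot.
Set Implicit Arguments. Unset Strict Implicit. Unset Printing Implicit Defensive.

Record automaton (Q Sigma : finType) := Automaton {
  trans : Q -> Sigma -> Q;
  out   : Q -> Sigma -> Sigma }.

(* Right-infinite words: w i is the (i+1)-th letter sigma_{i+1}. *)
Definition word (Sigma : Type) := nat -> Sigma.

Fixpoint run (Q Sigma : finType) (A : automaton Q Sigma) (q : Q) (w : word Sigma)
  (i : nat) : Q :=
  match i with
  | 0 => q
  | i'.+1 => trans A (run A q w i') (w i')
  end.

Definition act (Q Sigma : finType) (A : automaton Q Sigma) (q : Q) (w : word Sigma)
  : word Sigma := fun i => out A (run A q w i) (w i).

Definition word_eq (Sigma : Type) (u v : word Sigma) : Prop := forall i, u i = v i.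

Definition is_fixed_point (Q Sigma : finType) (A : automaton Q Sigma) (q : Q)
  (w : word Sigma) : Prop := word_eq (act A q w) w.

Definition two_fixed_points (Q Sigma : finType) (A : automaton Q Sigma) (q : Q) : Prop :=
  exists w1 w2, is_fixed_point A q w1 /\ is_fixed_point A q w2 /\ ~ word_eq w1 w2.

Definition infinitely_many_fixed_points (Q Sigma : finType) (A : automaton Q Sigma)
  (q : Q) : Prop :=
  forall l : seq (word Sigma),
    exists w, is_fixed_point A q w /\ (forall u, List.In u l -> ~ word_eq w u).

(* Main.v *)
Require Import Defs.
From mathcomp Require Import all_boot.
From Stdlib Require Import Classical.

Section S.
Variables (Q Sigma : finType) (A : automaton Q Sigma).

Definition glue (w : word Sigma) (m : nat) (w' : word Sigma) : word Sigma :=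
  fun i => if i < m then w i else w' (i - m).

Definition shiftw (m : nat) (v : word Sigma) : word Sigma := fun k => v (m + k).

Lemma run_prefix q x y m : (forall i, i < m -> x i = y i) ->
  forall i, i <= m -> run A q x i = run A q y i.
Proof.
move=> H; elim=> [|i IH] Hi //=.
rewrite IH ?(ltnW Hi) // H //.
Qed.

Lemma run_ext q x y : (forall i, x i = y i) -> forall i, run A q x i = run A q y i.
Proof. by move=> H; elim=> [|i IH] //=; rewrite IH H. Qed.

Lemma run_shift q x m i : run A q x (m + i) = run A (run A q x m) (shiftw m x) i.
Proof.
elim: i => [|i IH]; first by rewrite addn0.
by rewrite addnS /= IH.
Qed.

Lemma glue_fixed q w m w' : is_fixed_point A q w ->
  is_fixed_point A (run A q w m) w' -> is_fixed_point A q (glue w m w').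
Proof.
move=> Hw Hw' i; rewrite /act.
have Hp : forall j, j < m -> glue w m w' j = w j by move=> j Hj; rewrite /glue Hj.
case: (ltnP i m) => Him.
  rewrite (@run_prefix q (glue w m w') w m Hp _ (ltnW Him)) Hp //.
  exact: Hw.
have Hs : forall k, shiftw m (glue w m w') k = w' k.
  by move=> k; rewrite /shiftw /glue ltnNge leq_addr /= addKn.
rewrite -(subnKC Him) run_shift (@run_prefix q (glue w m w') w m Hp _ (leqnn m)).
rewrite (@run_ext _ _ _ Hs).
have := Hs (i - m); rewrite /shiftw => ->.
exact: Hw'.
Qed.

Lemma main_aux (H : forall q : Q, two_fixed_points A q) (n : nat) :
  forall (l : seq (word Sigma)), size l = n ->
  forall q, exists w, is_fixed_point A q w /\ (forall u, List.In u l -> ~ word_eq w u).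
Proof.
elim: n => [|n IH] [|u l] //= Hs q.
  by have [w1 [w2 [H1 _]]] := H q; exists w1.
have [w [Hw Hwu]] : exists w, is_fixed_point A q w /\ ~ word_eq w u.
  have [w1 [w2 [H1 [H2 H12]]]] := H q.
  case: (classic (word_eq w1 u)) => E1.
    exists w2; split => // E2; apply: H12 => i; by rewrite E1 E2.
  by exists w1.
have [i Hi] : exists i, w i <> u i.
  by apply: NNPP => C; apply: Hwu => j; apply: NNPP => Cj; apply: C; exists j.
set m := i.+1.
have Hsz : size (List.map (shiftw m) l) = n by rewrite size_map; case: Hs.
have [w' [Hw' Hav]] := IH _ Hsz (run A q w m).
exists (glue w m w'); split; first exact: glue_fixed.
move=> v [<-|Hv] E.
  by apply: Hi; rewrite -E /glue ltnSn.
apply: (Hav (shiftw m v) (List.in_map _ _ _ Hv)) => k.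
have := E (m + k); rewrite /glue ltnNge leq_addr /= addKn => ->.
by [].
Qed.
End S.

Theorem mainTheorem3 (Q Sigma : finType) (A : automaton Q Sigma) :
  (forall q : Q, two_fixed_points A q) ->
  forall q : Q, infinitely_many_fixed_points A q.
Proof. by move=> H q l; exact: (@main_aux _ _ A H _ l erefl q). Qed.
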